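(* Let $(\Sigma,\theta)$ be a topological space. The subword topology on $\Sigma^*$ is the least fixed point of the map $S$ sending a topology $\tau$ on $\Sigma^*$ to the topology generated by the sets $\uparrow_{\le^*}(UV)$ for $U,V\in\tau$, and $\uparrow_{\le^*}W$ for $W\in\theta$.
   Context: $\Sigma^*$ is the set of finite words; $UV$ is concatenation of sets of words; elements of $\Sigma$ are identified with one-letter words. $\le$ is the specialisation preorder of $\theta$ ($x\le y$ iff every open set containing $x$ contains $y$). Higman's ordering: $u\le^* w$ iff there is a strictly increasing $h:\{1,\dots,|u|\}\to\{1,\dots,|w|\}$ with $u_i\le w_{h(i)}$ for all $i$; $\uparrow_{\le^*}E$ is the upward closure of $E$. The subword topology on $\Sigma^*$ is generated by the sets $\Sigma^*U_1\Sigma^*\cdots\Sigma^*U_n\Sigma^*$ with $n\ge0$ and $U_i\in\theta$. *)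

(* Defs.v *)
From Stdlib Require Import List Arith.
Import ListNotations.
Set Implicit Arguments.

Definition set_of (T : Type) := T -> Prop.

Definition is_topology (T : Type) (O : set_of (set_of T)) : Prop :=
  O (fun _ => True) /\
  (forall F : set_of (set_of T), (forall U, F U -> O U) ->
      O (fun x => exists U, F U /\ U x)) /\
  (forall U V, O U -> O V -> O (fun x => U x /\ V x)).

Definition generated (T : Type) (G : set_of (set_of T)) : set_of (set_of T) :=
  fun A => forall O, is_topology O -> (forall B, G B -> O B) -> O A.

Definition spec_le (S : Type) (theta : set_of (set_of S)) (x y : S) : Prop :=
  forall U, theta U -> U x -> U y.

(* Higman's ordering (0-based indices): u <=* w iff there is a strictly
   increasing h : {0..|u|-1} -> {0..|w|-1} with u_i <= w_{h i}. *)
Definition higman (S : Type) (theta : set_of (set_of S)) (u w : list S) : Prop :=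
  exists h : nat -> nat,
    (forall i j, i < j < length u -> h i < h j) /\
    (forall i, i < length u -> h i < length w) /\
    (forall i, i < length u -> exists a b,
        nth_error u i = Some a /\ nth_error w (h i) = Some b /\ spec_le theta a b).

Definition up_higman (S : Type) (theta : set_of (set_of S)) (E : set_of (list S))
  : set_of (list S) :=
  fun w => exists u, E u /\ higman theta u w.

Definition concat_set (S : Type) (U V : set_of (list S)) : set_of (list S) :=
  fun w => exists u v, U u /\ V v /\ w = u ++ v.

Definition letters (S : Type) (U : set_of S) : set_of (list S) :=
  fun w => exists a, U a /\ w = [a].

Definition all_words (S : Type) : set_of (list S) := fun _ => True.

(* Sigma^* U_1 Sigma^* ... Sigma^* U_n Sigma^* *)
Fixpoint subword_basic (S : Type) (Us : list (set_of S)) : set_of (list S) :=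
  match Us with
  | [] => @all_words S
  | U :: Us' => concat_set (@all_words S)
                  (concat_set (letters U) (subword_basic Us'))
  end.

Definition subword_topology (S : Type) (theta : set_of (set_of S))
  : set_of (set_of (list S)) :=
  generated (fun A => exists Us, Forall theta Us /\ A = subword_basic Us).

Definition S_map (S : Type) (theta : set_of (set_of S))
  (tau : set_of (set_of (list S))) : set_of (set_of (list S)) :=
  generated (fun A =>
    (exists U V, tau U /\ tau V /\ A = up_higman theta (concat_set U V)) \/
    (exists W, theta W /\ A = up_higman theta (letters W))).

(* Main.v *)
Require Import Defs.
From Stdlib Require Import List Arith Lia FunctionalExtensionality PropExtensionality.
Import ListNotations.

Set Implicit Arguments.
Section S.
Variable Sg : Type.
Variable th : set_of (set_of Sg).

Notation Bs := (@subword_basic Sg).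

Lemma set_ext (T : Type) (A B : set_of T) : (forall x, A x <-> B x) -> A = B.
Proof. intro H. apply functional_extensionality; intro x. apply propositional_extensionality; auto. Qed.

Lemma gen_top (T : Type) (G : set_of (set_of T)) : is_topology (generated G).
Proof.
  split; [|split].
  - intros O HO HG. apply HO.
  - intros F HF O HO HG. apply HO. intros U HU. apply (HF U HU O HO HG).
  - intros U V HU HV O HO HG. apply HO; [apply HU|apply HV]; auto.
Qed.

Lemma gen_incl (T : Type) (G : set_of (set_of T)) B : G B -> generated G B.
Proof. intros H O _ HG. auto. Qed.

Lemma top_ext (T : Type) (O O' : set_of (set_of T)) :
  (forall A, O A <-> O' A) -> is_topology O -> is_topology O'.
Proof.
  intros E [H1 [H2 H3]]. split; [|split].
  - apply E; auto.
  - intros F HF. apply E, H2. intros U HU; apply E; auto.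
  - intros U V HU HV. apply E, H3; apply E; auto.
Qed.

Lemma B_cons U Us w : Bs (U::Us) w <-> exists x a y, U a /\ Bs Us y /\ w = x ++ a :: y.
Proof.
  simpl. unfold concat_set, letters. split.
  - intros (u & v & _ & (u' & v' & (a & Ha & ->) & Hv' & ->) & ->).
    exists u, a, v'. auto.
  - intros (x & a & y & Ha & Hy & ->). exists x, (a::y). split; [exact I|].
    split; [|reflexivity]. exists [a], y. split; eauto.
Qed.

Lemma B_prepend Us u v : Bs Us v -> Bs Us (u ++ v).
Proof.
  destruct Us as [|U Us]; intros H; [exact I|].
  apply B_cons in H as (x & a & y & Ha & Hy & ->). apply B_cons.
  exists (u++x), a, y. rewrite <- app_assoc. auto.
Qed.

Lemma B_app1 Us Vs u v : Bs Us u -> Bs Vs v -> Bs (Us++Vs) (u++v).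
Proof.
  revert u; induction Us as [|U Us IH]; intros u Hu Hv.
  - apply B_prepend; auto.
  - apply B_cons in Hu as (x & a & y & Ha & Hy & ->). simpl app. apply B_cons.
    exists x, a, (y++v). split; auto. split; auto. rewrite <- app_assoc. reflexivity.
Qed.

Lemma B_app2 Us Vs w : Bs (Us++Vs) w -> exists u v, Bs Us u /\ Bs Vs v /\ w = u++v.
Proof.
  revert w; induction Us as [|U Us IH]; intros w Hw.
  - exists [], w. simpl. split; [exact I|auto].
  - simpl in Hw. apply B_cons in Hw as (x & a & y & Ha & Hy & ->).
    destruct (IH y Hy) as (y1 & y2 & H1 & H2 & ->).
    exists (x ++ a :: y1), y2. split; [apply B_cons; exists x, a, y1; auto|].
    split; auto. rewrite <- app_assoc. reflexivity.
Qed.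

Lemma B_mono Xs Ys w : Forall2 (fun X Y => forall a, X a -> Y a) Xs Ys -> Bs Xs w -> Bs Ys w.
Proof.
  intro H; revert w; induction H as [|X Y Xs Ys HXY _ IH]; intros w Hw; auto.
  apply B_cons in Hw as (x & a & y & Ha & Hy & ->). apply B_cons. exists x, a, y. auto.
Qed.

Lemma B_pointwise (P : set_of Sg -> Sg -> Prop) Ws w :
  (forall W a, P W a -> W a) -> Forall2 P Ws w -> Bs Ws w.
Proof.
  intros HP H; induction H as [|W a Ws w HW _ IH]; [exact I|].
  apply B_cons. exists [], a, w. split; [eapply HP; eauto|auto].
Qed.

Definition full : set_of Sg := fun _ => True.

Lemma full_nbhd (Ht : is_topology th) u :
  Forall2 (fun W a => th W /\ W a) (map (fun _ => full) u) u.
Proof. induction u; simpl; constructor; auto. split; [apply Ht|exact I]. Qed.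

Lemma nbhd (Ht : is_topology th) Us u : Forall th Us -> Bs Us u ->
  exists Ws, Forall2 (fun W a => th W /\ W a) Ws u /\ forall x, Bs Ws x -> Bs Us x.
Proof.
  revert u; induction Us as [|U Us IH]; intros u HF Hu.
  - exists (map (fun _ => full) u). split; [apply full_nbhd; auto|]. intros; exact I.
  - inversion HF; subst.
    apply B_cons in Hu as (x & a & y & Ha & Hy & ->).
    destruct (IH y H2 Hy) as (Wy & HW1 & HW2).
    exists (map (fun _ => full) x ++ U :: Wy). split.
    + apply Forall2_app; [apply full_nbhd; auto|]. constructor; auto.
    + intros z Hz. apply B_app2 in Hz as (z1 & z2 & _ & Hz2 & ->).
      apply B_cons in Hz2 as (p & b & q & Hb & Hq & ->). apply B_cons.
      exists (z1 ++ p), b, q. rewrite <- app_assoc. auto.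
Qed.

End S.


Section S2.
Variable Sg : Type.
Variable th : set_of (set_of Sg).
Notation Bs := (@subword_basic Sg).

Lemma nth_mid (x y : list Sg) a i : nth_error (x ++ a :: y) (length x + i) = nth_error (a::y) i.
Proof. rewrite nth_error_app2 by lia. f_equal. lia. Qed.

Lemma higman_refl u : higman th u u.
Proof.
  exists (fun i => i). split; [lia|]. split; [auto|].
  intros i Hi. destruct (nth_error u i) eqn:E.
  - exists s, s. split; auto. split; auto. intros U _ H; exact H.
  - apply nth_error_None in E. lia.
Qed.

Lemma up_closed Us u w : Forall th Us -> Bs Us u -> higman th u w -> Bs Us w.
Proof.
  revert u w; induction Us as [|U Us IH]; intros u w HF Hu Hh; [exact I|].
  inversion HF as [|? ? HU HUs]; subst.
  apply B_cons in Hu as (x & a & y & Ha & Hy & ->).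
  destruct Hh as (h & Hmon & Hbd & Hnth).
  rewrite length_app in Hmon, Hbd, Hnth. simpl in Hmon, Hbd, Hnth.
  set (k := length x) in *.
  destruct (Hnth k ltac:(lia)) as (a' & b & E1 & E2 & Hle).
  replace k with (k + 0) in E1 by lia. unfold k in E1. rewrite nth_mid in E1.
  simpl in E1. injection E1 as <-.
  destruct (nth_error_split w (h k) E2) as (l1 & l2 & -> & Hl1).
  apply B_cons. exists l1, b, l2. split; [apply (Hle U HU Ha)|]. split; [|reflexivity].
  apply (IH y); auto.
  exists (fun i => h (k + 1 + i) - (h k + 1)).
  assert (Hgt : forall i, i < length y -> h k < h (k + 1 + i)) by (intros; apply Hmon; lia).
  split; [|split].
  - intros i j Hij. assert (h (k+1+i) < h (k+1+j)) by (apply Hmon; lia).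
    specialize (Hgt i ltac:(lia)). lia.
  - intros i Hi. specialize (Hbd (k+1+i) ltac:(lia)). rewrite length_app in Hbd.
    simpl in Hbd. specialize (Hgt i Hi). lia.
  - intros i Hi. destruct (Hnth (k+1+i) ltac:(lia)) as (a0 & b0 & F1 & F2 & Hl).
    exists a0, b0. split; [|split; [|exact Hl]].
    + replace (k+1+i) with (length x + S i) in F1 by (unfold k; lia).
      rewrite nth_mid in F1. exact F1.
    + specialize (Hgt i Hi).
      replace (h (k+1+i)) with (length l1 + S (h (k + 1 + i) - (h k + 1))) in F2 by lia.
      rewrite nth_mid in F2. exact F2.
Qed.

Lemma letters_eq W : th W -> up_higman th (letters W) = Bs [W].
Proof.
  intro HW. apply set_ext. intro w. split.
  - intros (u & (a & Ha & ->) & Hh). apply (up_closed (Us:=[W]) (u:=[a])); auto.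
    apply B_cons. exists [], a, []. split; auto. split; [exact I|reflexivity].
  - intro H. apply B_cons in H as (x & a & y & Ha & _ & ->).
    exists [a]. split; [exists a; auto|].
    exists (fun _ => length x). split; [intros; simpl in *; lia|]. split.
    + intros i Hi. rewrite length_app. simpl. lia.
    + intros i Hi. simpl in Hi. assert (i = 0) as -> by lia. exists a, a.
      split; [reflexivity|]. split; [replace (length x) with (length x + 0) by lia; rewrite nth_mid; reflexivity|].
      intros U _ HU; exact HU.
Qed.

Lemma cons_eq U Us : Forall th (U::Us) ->
  Bs (U::Us) = up_higman th (concat_set (Bs [U]) (Bs Us)).
Proof.
  intro HF. apply set_ext. intro w. split.
  - intro H. change (U::Us) with ([U]++Us) in H. apply B_app2 in H as (u & v & H1 & H2 & ->).
    exists (u++v). split; [exists u, v; auto|apply higman_refl].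
  - intros (u & (u1 & u2 & H1 & H2 & ->) & Hh). apply (up_closed (Us:=U::Us) (u:=u1++u2)); auto.
    change (U::Us) with ([U]++Us). apply B_app1; auto.
Qed.

End S2.


Section S3.
Variable Sg : Type.
Variable th : set_of (set_of Sg).
Notation Bs := (@subword_basic Sg).
Notation Pn := (fun (W : set_of Sg) (a : Sg) => th W /\ W a).
Notation sb := (fun (X Y : set_of Sg) => forall a, X a -> Y a).

Fixpoint inter2 (l1 l2 : list (set_of Sg)) : list (set_of Sg) :=
  match l1, l2 with
  | X::l1', Y::l2' => (fun x => X x /\ Y x) :: inter2 l1' l2'
  | _, _ => []
  end.

Lemma inter2_ok (Ht : is_topology th) Xs Ys w :
  Forall2 Pn Xs w -> Forall2 Pn Ys w ->
  Forall2 Pn (inter2 Xs Ys) w /\ Forall2 sb (inter2 Xs Ys) Xs /\ Forall2 sb (inter2 Xs Ys) Ys.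
Proof.
  intro H; revert Ys; induction H as [|X a Xs w HX _ IH]; intros Ys HY.
  - inversion HY; subst. simpl. auto.
  - inversion HY as [|Y ? Ys' ? HYa HYs]; subst. simpl.
    destruct (IH Ys' HYs) as (A1 & A2 & A3).
    split; [|split]; constructor; auto; try (intros ? []; auto).
    destruct HX, HYa. split; [apply Ht; auto|auto].
Qed.

Definition Op (A : set_of (list Sg)) : Prop :=
  forall w, A w -> exists Ws, Forall2 Pn Ws w /\ forall x, Bs Ws x -> A x.

Lemma Op_top (Ht : is_topology th) : is_topology Op.
Proof.
  split; [|split].
  - intros w _. exists (map (fun _ => @full Sg) w). split; [apply full_nbhd; auto|]. intros; exact I.
  - intros F HF w (U & HU & Hw). destruct (HF U HU w Hw) as (Ws & H1 & H2).
    exists Ws. split; auto. intros x Hx. exists U. auto.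
  - intros U V HU HV w [Hu Hv]. destruct (HU w Hu) as (W1 & A1 & B1).
    destruct (HV w Hv) as (W2 & A2 & B2).
    destruct (inter2_ok Ht A1 A2) as (C1 & C2 & C3).
    exists (inter2 W1 W2). split; auto. intros x Hx. split.
    + apply B1. eapply B_mono; eauto.
    + apply B2. eapply B_mono; eauto.
Qed.

Definition basics : set_of (set_of (list Sg)) :=
  fun A => exists Us, Forall th Us /\ A = Bs Us.

Lemma Forall2_fst Ws (w : list Sg) : Forall2 Pn Ws w -> Forall th Ws.
Proof. intro H; induction H; constructor; tauto. Qed.

Lemma Op_sub A : Op A -> subword_topology th A.
Proof.
  intro HA.
  set (F := fun V : set_of (list Sg) => exists Ws, Forall th Ws /\ V = Bs Ws /\ forall x, V x -> A x).
  assert (E : A = fun x => exists V, F V /\ V x).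
  { apply set_ext. intro x. split.
    - intro Hx. destruct (HA x Hx) as (Ws & H1 & H2). exists (Bs Ws). split.
      + exists Ws. split; [eapply Forall2_fst; eauto|]. split; auto.
      + eapply B_pointwise; [|exact H1]. simpl. tauto.
    - intros (V & (Ws & _ & _ & HV) & Hx). auto. }
  rewrite E. apply (proj1 (proj2 (gen_top _))).
  intros V (Ws & H1 & -> & _). apply gen_incl. exists Ws. auto.
Qed.

Lemma sub_Op (Ht : is_topology th) A : subword_topology th A -> Op A.
Proof.
  intro H. apply H; [apply Op_top; auto|].
  intros B (Us & HUs & ->) w Hw. destruct (@nbhd _ _ Ht _ _ HUs Hw) as (Ws & H1 & H2). eauto.
Qed.

Lemma prod_open (Ht : is_topology th) U V :
  subword_topology th U -> subword_topology th V ->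
  subword_topology th (up_higman th (concat_set U V)).
Proof.
  intros HU HV. apply sub_Op in HU, HV; auto. apply Op_sub.
  intros w (z & (u & v & Hu & Hv & ->) & Hh).
  destruct (HU u Hu) as (W1 & A1 & B1). destruct (HV v Hv) as (W2 & A2 & B2).
  assert (Hw : Bs (W1 ++ W2) w).
  { apply (up_closed (th := th) (Us:=W1++W2) (u:=u++v)); auto.
    - apply Forall_app; split; eapply Forall2_fst; eauto.
    - apply B_app1; (eapply B_pointwise; [|eassumption]); simpl; tauto. }
  assert (HF : Forall th (W1 ++ W2)) by (apply Forall_app; split; eapply Forall2_fst; eauto).
  destruct (@nbhd _ _ Ht _ _ HF Hw) as (Ws & C1 & C2). exists Ws. split; auto.
  intros x Hx. apply C2 in Hx. apply B_app2 in Hx as (x1 & x2 & D1 & D2 & ->).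
  exists (x1 ++ x2). split; [exists x1, x2; auto|apply higman_refl].
Qed.

End S3.

Theorem mainTheorem10 (Sigma : Type) (theta : set_of (set_of Sigma)) :
  is_topology theta ->
  (forall A, S_map theta (subword_topology theta) A <-> subword_topology theta A) /\
  (forall tau : set_of (set_of (list Sigma)),
      (forall A, S_map theta tau A <-> tau A) ->
      forall A, subword_topology theta A -> tau A).
Proof.
  intro Ht. split.
  - intro A. split.
    + intro H. apply H; [apply gen_top|].
      intros B [(U & V & HU & HV & ->) | (W & HW & ->)].
      * apply prod_open; auto.
      * rewrite (@letters_eq _ theta W HW). apply gen_incl. exists [W]. auto.
    + intro H. apply H; [apply gen_top|].
      intros B (Us & HUs & ->). destruct Us as [|U Us].
      * apply (proj1 (gen_top _)).
      * rewrite (@cons_eq _ theta U Us HUs). apply gen_incl. left.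
        inversion HUs; subst.
        exists (subword_basic [U]), (subword_basic Us).
        split; [apply gen_incl; exists [U]; auto|].
        split; [apply gen_incl; exists Us; auto|reflexivity].
  - intros tau Hfix.
    assert (Htau : is_topology tau) by (apply (@top_ext _ (S_map theta tau) tau Hfix), gen_top).
    intros A H. apply H; [exact Htau|].
    intros B (Us & HUs & ->). clear A H.
    induction Us as [|U Us IH].
    + apply Htau.
    + inversion HUs; subst. rewrite (@cons_eq _ theta U Us HUs).
      apply (proj1 (Hfix _)), gen_incl. left.
      exists (subword_basic [U]), (subword_basic Us). split; [|split; auto].
      rewrite <- (@letters_eq _ theta U ltac:(assumption)). apply (proj1 (Hfix _)), gen_incl. right. eauto.
Qed.
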